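(* Let $P=\{\mathbf{x}: A\mathbf{x}\le\mathbf{b}\}\subseteq[0,k]^n\subseteq\mathbb{R}^n$ be a $d$-dimensional lattice polytope with integral constraint matrix $A$. Then the monotone diameter of $P$ is at most $(d-1)\|A\|_{\infty}nk+1$.
   Context: A lattice polytope is a polytope whose vertices have integer coordinates. $\|A\|_\infty$ denotes the maximum absolute value of an entry of $A$. A $\mathbf{c}$-monotone path is a sequence of vertices of $P$ in which consecutive vertices are joined by an edge of $P$ and $\mathbf{c}^{\intercal}\mathbf{x}$ strictly increases; its length is its number of edges. The monotone diameter of $P$ is the maximum, over all generic linear objectives $\mathbf{c}$ (not constant on any edge) and all vertices $\mathbf{v}$, of the length of a shortest $\mathbf{c}$-monotone path from $\mathbf{v}$ to the $\mathbf{c}$-maximal vertex. *)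

(* Defs.v *)
From HB Require Import structures.
From mathcomp Require Import all_boot all_order all_algebra.
From mathcomp Require Import reals.
Set Implicit Arguments. Unset Strict Implicit. Unset Printing Implicit Defensive.
Import Order.TTheory GRing.Theory Num.Theory.
Local Open Scope ring_scope.

Section Polytopes.
Variable R : realType.
Variable n : nat.

Definition dotv (c x : 'cV[R]_n) : R := \sum_(i < n) c i 0 * x i 0.

Definition polyhedron (m : nat) (A : 'M[int]_(m, n)) (b : 'cV[R]_m)
  : 'cV[R]_n -> Prop :=
  fun x => forall i : 'I_m, (map_mx (fun z : int => z%:~R) A *m x) i 0 <= b i 0.

Variable P : 'cV[R]_n -> Prop.

Definition is_vertex (v : 'cV[R]_n) : Prop :=
  P v /\ exists c : 'cV[R]_n, forall y, P y -> y <> v -> dotv c y < dotv c v.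

Definition is_edge (u v : 'cV[R]_n) : Prop :=
  P u /\ P v /\ u <> v /\
  exists c : 'cV[R]_n,
    (forall y, P y -> dotv c y <= dotv c u) /\ dotv c u = dotv c v /\
    (forall y, P y -> dotv c y = dotv c u ->
       exists t : R, 0 <= t <= 1 /\ y = (1 - t) *: u + t *: v).

Definition lattice_vertices : Prop :=
  forall v, is_vertex v -> forall i : 'I_n, exists z : int, v i 0 = z%:~R.

Definition aff_indep_from (x0 : 'cV[R]_n) (k : nat) (X : 'I_k -> 'cV[R]_n) : bool :=
  row_free (\matrix_(i < k) (X i - x0)^T).

Definition aff_dim (d : nat) : Prop :=
  (exists x0, P x0 /\ exists X : 'I_d -> 'cV[R]_n,
      (forall i, P (X i)) /\ aff_indep_from x0 X) /\
  (forall x0 (X : 'I_d.+1 -> 'cV[R]_n),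
      P x0 -> (forall i, P (X i)) -> ~~ aff_indep_from x0 X).

Definition generic_obj (c : 'cV[R]_n) : Prop :=
  forall u v, is_edge u v -> dotv c u <> dotv c v.

Definition c_max_vertex (c w : 'cV[R]_n) : Prop :=
  is_vertex w /\ forall y, P y -> dotv c y <= dotv c w.

Definition monotone_path (c v w : 'cV[R]_n) (L : nat) : Prop :=
  exists f : nat -> 'cV[R]_n,
    f 0%N = v /\ f L = w /\
    forall i, (i < L)%N -> is_edge (f i) (f i.+1) /\ dotv c (f i) < dotv c (f i.+1).

Definition monotone_diameter_le (D : nat) : Prop :=
  forall c v w, generic_obj c -> is_vertex v -> c_max_vertex c w ->
    exists L, (L <= D)%N /\ monotone_path c v w L.

End Polytopes.

Definition mx_inf_norm (m n : nat) (A : 'M[int]_(m, n)) : nat :=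
  \max_(i < m) \max_(j < n) `|A i j|%N.

(* Main.v *)
Require Import Defs.
From mathcomp Require Import all_boot all_order all_algebra.
From mathcomp Require Import reals ring lra zify.
From mathcomp Require boolp.
Import Order.TTheory GRing.Theory Num.Theory.
Local Open Scope ring_scope.
Set Implicit Arguments. Unset Strict Implicit. Unset Printing Implicit Defensive.

Section Dot.
Variable R : realType.
Variable n : nat.
Implicit Types c x y : 'cV[R]_n.

Lemma dotvDl c1 c2 x : dotv (c1 + c2) x = dotv c1 x + dotv c2 x.
Proof. rewrite /dotv -big_split /=; apply: eq_bigr => i _; rewrite !mxE; ring. Qed.
Lemma dotvDr c x y : dotv c (x + y) = dotv c x + dotv c y.
Proof. rewrite /dotv -big_split /=; apply: eq_bigr => i _; rewrite !mxE; ring. Qed.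
Lemma dotvZl a c x : dotv (a *: c) x = a * dotv c x.
Proof. rewrite /dotv mulr_sumr; apply: eq_bigr => i _; rewrite !mxE; ring. Qed.
Lemma dotvZr a c x : dotv c (a *: x) = a * dotv c x.
Proof. rewrite /dotv mulr_sumr; apply: eq_bigr => i _; rewrite !mxE; ring. Qed.
Lemma dotvNl c x : dotv (- c) x = - dotv c x.
Proof. by rewrite -scaleN1r dotvZl mulN1r. Qed.
Lemma dotvNr c x : dotv c (- x) = - dotv c x.
Proof. by rewrite -scaleN1r dotvZr mulN1r. Qed.
Lemma dotvBl c1 c2 x : dotv (c1 - c2) x = dotv c1 x - dotv c2 x.
Proof. by rewrite dotvDl dotvNl. Qed.
Lemma dotvBr c x y : dotv c (x - y) = dotv c x - dotv c y.
Proof. by rewrite dotvDr dotvNr. Qed.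
Lemma dotv0l x : dotv 0 x = 0.
Proof. by rewrite /dotv big1 // => i _; rewrite mxE mul0r. Qed.
Lemma dotvE c x : dotv c x = (c^T *m x) 0 0.
Proof. by rewrite /dotv mxE; apply: eq_bigr => i _; rewrite mxE. Qed.

Lemma dotv_comb c l x y : dotv c (l *: x + (1 - l) *: y) = l * dotv c x + (1 - l) * dotv c y.
Proof. by rewrite dotvDr !dotvZr. Qed.

Lemma dotv_sq_gt0 x : x != 0 -> 0 < dotv x x.
Proof.
move=> nz.
have [i Hi] : exists i, x i 0 != 0.
  case: (pickP (fun i => x i 0 != 0)) => [i Hi|H]; first by exists i.
  case/negP: nz; apply/eqP/matrixP => i j; rewrite ord1 mxE.
  by move: (H i) => /negbFE /eqP.
rewrite /dotv (bigD1 i) //=.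
have h1 : 0 < x i 0 * x i 0.
  by move: Hi; rewrite neq_lt => /orP [] h; nra.
have h2 : 0 <= \sum_(j < n | j != i) x j 0 * x j 0.
  by apply: sumr_ge0 => j _; rewrite -expr2 sqr_ge0.
lra.
Qed.

End Dot.

Lemma seq_argmin (R : realType) (T : eqType) (s : seq T) (Pr : pred T) (F : T -> R) :
  (exists2 x, x \in s & Pr x) ->
  exists i0, [/\ i0 \in s, Pr i0 & forall i, i \in s -> Pr i -> F i0 <= F i].
Proof.
elim: s => [[x]//|a s IH] [x Hx Px].
case Pa: (Pr a).
  case: (boolP (has Pr s)) => [/hasP [y Hy Py]|Hn].
    case: IH; first by exists y.
    move=> i0 [Hi0 Pi0 Hm].
    case: (leP (F a) (F i0)) => h.
      exists a; split; rewrite ?mem_head // => i; rewrite in_cons => /orP [/eqP ->|Hi] Pi //.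
      by apply: le_trans h (Hm _ Hi Pi).
    exists i0; split; rewrite ?in_cons ?Hi0 ?orbT // => i; rewrite in_cons => /orP [/eqP ->|Hi] Pi.
      exact: ltW. exact: Hm.
  exists a; split; rewrite ?mem_head // => i; rewrite in_cons => /orP [/eqP ->|Hi] Pi //.
  by case/hasP: Hn; exists i.
case: IH.
  exists x => //; move: Hx; rewrite in_cons => /orP [/eqP Ha|//].
  by rewrite Ha Pa in Px.
move=> i0 [Hi0 Pi0 Hm]; exists i0; split; rewrite ?in_cons ?Hi0 ?orbT //.
move=> i; rewrite in_cons => /orP [/eqP ->|Hi] Pi; last exact: Hm.
by rewrite Pa in Pi.
Qed.

Lemma eps_lemma (R : realType) (T : eqType) (s : seq T) (al be : T -> R) :
  (forall z, z \in s -> 0 < al z) ->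
  exists2 e, 0 < e & forall z, z \in s -> 0 < al z - e * `|be z|.
Proof.
elim: s => [|a s IH] H; first by exists 1 => // z; rewrite in_nil.
case: IH => [z Hz|e1 He1 H1]; first by apply: H; rewrite in_cons Hz orbT.
have Ha : 0 < al a by apply: H; rewrite mem_head.
set e0 := al a / (`|be a| + 1).
have Hn : 0 <= `|be a| by [].
have He0 : 0 < e0 by apply: divr_gt0 => //; lra.
exists (Num.min e1 e0); first by rewrite lt_min He1 He0.
move=> z; rewrite in_cons => /orP [/eqP ->|Hz].
  have h1 : Num.min e1 e0 <= e0 by rewrite ge_min lexx orbT.
  have h2 : e0 * `|be a| < al a.
    rewrite /e0 mulrAC ltr_pdivrMr; last lra.
    nra.
  have h3 : Num.min e1 e0 * `|be a| <= e0 * `|be a| by apply: ler_wpM2r.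
  lra.
have h1 : Num.min e1 e0 <= e1 by rewrite ge_min lexx.
have h3 : Num.min e1 e0 * `|be z| <= e1 * `|be z| by apply: ler_wpM2r.
have := H1 z Hz; lra.
Qed.

Lemma neg_norm_le (R : realType) (x : R) : - `|x| <= x.
Proof. by have := ler_norm (- x); rewrite normrN; lra. Qed.

Lemma extreme_pt (R : realType) n (Q : seq 'cV[R]_n) (c0 : 'cV[R]_n) : Q != [::] ->
  exists q, [/\ q \in Q, (forall q', q' \in Q -> dotv c0 q' <= dotv c0 q) &
     exists kk : 'cV[R]_n, forall q', q' \in Q -> q' != q -> dotv kk q' < dotv kk q].
Proof.
elim: Q => [//|q Q' IH] _.
case: (eqVneq Q' [::]) => [->|nQ].
  exists q; split; first by rewrite mem_head.
  - by move=> q'; rewrite mem_seq1 => /eqP ->.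
  - by exists 0 => q'; rewrite mem_seq1 => /eqP ->; rewrite eqxx.
case: (IH nQ) => y' [Hy' Hmax [k' Hk']].
have Hin : forall q', q' \in q :: Q' -> q' != q -> q' \in Q'.
  by move=> q'; rewrite in_cons => /orP [/eqP ->|//]; rewrite eqxx.
case: (ltgtP (dotv c0 q) (dotv c0 y')) => Hc.
- have Hpos : forall z, z \in [:: q] -> 0 < dotv c0 y' - dotv c0 z.
    by move=> z; rewrite mem_seq1 => /eqP ->; lra.
  have [e He Hee] := @eps_lemma _ _ [:: q] (fun z => dotv c0 y' - dotv c0 z)
                        (fun z => dotv k' y' - dotv k' z) Hpos.
  exists y'; split; first by rewrite in_cons Hy' orbT.
    move=> q'; rewrite in_cons => /orP [/eqP ->|Hq]; [lra|exact: Hmax].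
  exists (e *: k' + c0) => q' Hq' Hne; rewrite !dotvDl !dotvZl.
  case: (eqVneq q' q) => [->|Nq].
    have := Hee q (mem_head _ _); have := neg_norm_le (dotv k' y' - dotv k' q).
    move=> h1 h2; nra.
  have Hq := Hin _ Hq' Nq; have := Hk' _ Hq Hne; have := Hmax _ Hq; nra.
- exists q; split; first by rewrite mem_head.
    move=> q'; rewrite in_cons => /orP [/eqP ->|Hq]; first lra.
    have := Hmax _ Hq; lra.
  exists c0 => q' Hq' Hne; have := Hmax _ (Hin _ Hq' Hne); lra.
- case: (eqVneq q y') => [Eq|Nq].
    exists y'; split; first by rewrite in_cons Hy' orbT.
      move=> q'; rewrite in_cons => /orP [/eqP ->|Hq]; [lra|exact: Hmax].
    exists k' => q' Hq' Hne; apply: Hk' => //; apply: Hin => //; by rewrite Eq.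
  have Hmax' : forall q', q' \in q :: Q' -> dotv c0 q' <= dotv c0 q.
    move=> q'; rewrite in_cons => /orP [/eqP ->|Hq]; [lra|]; have := Hmax _ Hq; lra.
  case: (ltgtP (dotv k' q) (dotv k' y')) => Hk.
  + exists y'; split; first by rewrite in_cons Hy' orbT.
      move=> q'; rewrite in_cons => /orP [/eqP ->|Hq]; [lra|exact: Hmax].
    exists k' => q' Hq' Hne; case: (eqVneq q' q) => [->//|Nq'].
    exact: Hk' (Hin _ Hq' Nq') Hne.
  + exists q; split => //; first by rewrite mem_head.
    exists k' => q' Hq' Hne; have Hq := Hin _ Hq' Hne.
    case: (eqVneq q' y') => [->//|Ny]; have := Hk' _ Hq Ny; lra.
  + set u := q - y'.
    have Hpos : forall z, z \in [seq z <- Q' | z != y'] -> 0 < dotv k' y' - dotv k' z.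
      move=> z; rewrite mem_filter => /andP [Nz Hz]; have := Hk' _ Hz Nz; lra.
    have [e He Hee] := @eps_lemma _ _ [seq z <- Q' | z != y'] (fun z => dotv k' y' - dotv k' z)
                        (fun z => dotv u q - dotv u z) Hpos.
    exists q; split => //; first by rewrite mem_head.
    exists (k' + e *: u) => q' Hq' Hne; have Hq := Hin _ Hq' Hne.
    rewrite !dotvDl !dotvZl.
    case: (eqVneq q' y') => [->|Ny].
      have : 0 < dotv u u by apply: dotv_sq_gt0; rewrite subr_eq0.
      rewrite /u dotvBr => h; nra.
    have := Hee q'; rewrite mem_filter Ny Hq => /(_ isT) h1.
    have := neg_norm_le (dotv u q - dotv u q'); nra.
Qed.

Lemma arith1 (R : realType) (t : R) : 0 < t -> t < 1 -> 0 < 1 - t < 1.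
Proof. by move=> *; apply/andP; split; lra. Qed.

Section Poly.
Variable R : realType.
Variables n m k : nat.
Variable A : 'M[int]_(m, n).
Variable b : 'cV[R]_m.
Hypothesis Hbox : forall x, polyhedron A b x -> forall i : 'I_n, 0 <= x i 0 <= k%:R.

Local Notation PP := (polyhedron A b).
Implicit Types x y p t : 'cV[R]_n.
Definition Ar : 'M[R]_(m, n) := map_mx (fun z : int => z%:~R) A.
Definition active (x : 'cV[R]_n) i := (Ar *m x) i 0 == b i 0.
Definition act (x : 'cV[R]_n) : 'M[R]_(m, n) :=
  \matrix_(i, j) (if active x i then Ar i j else 0).


Lemma act_mul x y i : (act x *m y) i 0 = if active x i then (Ar *m y) i 0 else 0.
Proof.
rewrite [LHS]mxE; under eq_bigr do rewrite mxE.
case: ifP => _; first by rewrite mxE.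
by rewrite big1 // => j _; rewrite mul0r.
Qed.

Lemma ArD x y i : (Ar *m (x + y)) i 0 = (Ar *m x) i 0 + (Ar *m y) i 0.
Proof. by rewrite mulmxDr mxE. Qed.
Lemma ArZ s x i : (Ar *m (s *: x)) i 0 = s * (Ar *m x) i 0.
Proof. by rewrite -scalemxAr mxE. Qed.
Lemma ArN x i : (Ar *m (- x)) i 0 = - (Ar *m x) i 0.
Proof. by rewrite mulmxN mxE. Qed.

Lemma kernel_vec (B : 'M[R]_(m, n)) : (\rank B < n)%N -> exists t : 'cV[R]_n, t != 0 /\ B *m t = 0.
Proof.
move=> Hr; set K := kermx B^T.
have HK : (0 < \rank K)%N by rewrite mxrank_ker mxrank_tr subn_gt0.
case: (pickP (fun i => row i K != 0)) => [i Hi|H].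
  exists (row i K)^T; split.
    by apply: contra Hi => /eqP h; rewrite -[row i K]trmxK h trmx0.
  by rewrite -[B]trmxK -trmx_mul -row_mul mulmx_ker row0 trmx0.
suff : K = 0 by move=> h; rewrite h mxrank0 in HK.
apply/row_matrixP => i; rewrite row0; apply/eqP; exact: negbFE (H i).
Qed.

Lemma full_inj (B : 'M[R]_(m, n)) t : \rank B = n -> B *m t = 0 -> t = 0.
Proof.
move=> Hr Ht.
have Hf : row_free B^T by rewrite /row_free mxrank_tr Hr.
have : t^T *m B^T == 0 by rewrite -trmx_mul Ht trmx0.
rewrite (mulmx_free_eq0 _ Hf) => /eqP h.
by rewrite -[t]trmxK h trmx0.
Qed.

Lemma nonzero_coord (t : 'cV[R]_n) : t != 0 -> exists j, t j 0 != 0.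
Proof.
move=> nz; case: (pickP (fun j => t j 0 != 0)) => [j Hj|H]; first by exists j.
case/negP: nz; apply/eqP/matrixP => i j; rewrite ord1 mxE.
by move: (H i) => /negbFE /eqP.
Qed.

Lemma step_lemma p t : PP p -> act p *m t = 0 -> t != 0 ->
  exists s, [/\ 0 < s, PP (p + s *: t) & (\rank (act p) < \rank (act (p + s *: t)))%N].
Proof.
move=> Hp Ht nz.
have Hkt : forall i, (0 < (Ar *m t) i 0) -> ~~ active p i.
  move=> i Hi; apply/negP => Ha.
  by move: (act_mul p t i); rewrite Ht Ha mxE => h; rewrite -h ltxx in Hi.
have [i0 Hi0] : exists i, 0 < (Ar *m t) i 0.
  case: (pickP (fun i => 0 < (Ar *m t) i 0)) => [i Hi|H]; first by exists i.
  have Hall : forall s, 0 <= s -> PP (p + s *: t).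
    move=> s Hs i; rewrite ArD ArZ.
    have h1 := Hp i; have h2 : (Ar *m t) i 0 <= 0 by rewrite leNgt H.
    have : s * (Ar *m t) i 0 <= 0 by rewrite mulr_ge0_le0.
    lra.
  case: (nonzero_coord nz) => j Hj.
  have hk : (0:R) <= k%:R := ler0n _ _.
  move: Hj; rewrite neq_lt => /orP [] Hj.
    have Hs : (0:R) <= (k%:R + 1) / (- t j 0) by apply: divr_ge0; lra.
    have := @Hbox _ (Hall _ Hs) j. rewrite !mxE.
    have -> : (k%:R + 1) / - t j 0 * t j 0 = - (k%:R + 1) by field; apply/eqP; lra.
    have := @Hbox _ Hp j; lra.
  have Hs : (0:R) <= (k%:R + 1) / (t j 0) by apply: divr_ge0; lra.
  have := @Hbox _ (Hall _ Hs) j; rewrite !mxE.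
  have -> : (k%:R + 1) / t j 0 * t j 0 = (k%:R + 1) by field; apply/eqP; lra.
  have := @Hbox _ Hp j; lra.
pose r i := (b i 0 - (Ar *m p) i 0) / (Ar *m t) i 0.
have [i1 [_ Hi1 Hmin]] := @seq_argmin R _ (enum 'I_m) (fun i => 0 < (Ar *m t) i 0) r
  (ex_intro2 _ _ i0 (mem_enum _ i0) Hi0).
have Hsl : forall i, 0 < (Ar *m t) i 0 -> 0 < r i.
  move=> i Hi; apply: divr_gt0 => //.
  have := Hkt i Hi; rewrite /active => /negP h; have := Hp i.
  rewrite le_eqVlt => /orP [/eqP e|]; [by exfalso; apply: h; rewrite e|lra].
exists (r i1); split; first exact: Hsl.
  move=> i; rewrite ArD ArZ.
  case: (leP ((Ar *m t) i 0) 0) => Hi.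
    have := Hp i; have : 0 <= r i1 by apply: ltW; exact: Hsl.
    move=> h0 h1; have : r i1 * (Ar *m t) i 0 <= 0 by rewrite mulr_ge0_le0.
    lra.
  have := Hmin i (mem_enum _ i) Hi; rewrite /r.
  rewrite ler_pdivlMr // => h; lra.
have Hact1 : active (p + r i1 *: t) i1.
  rewrite /active ArD ArZ /r; apply/eqP; field; exact: lt0r_neq0.
have Hsub : (act p <= act (p + r i1 *: t))%MS.
  apply/row_subP => i.
  case Ha: (active p i).
    have Ha' : active (p + r i1 *: t) i.
      move: (act_mul p t i); rewrite Ht Ha mxE => h.
      by rewrite /active ArD ArZ -h mulr0 addr0.
    have -> : row i (act p) = row i (act (p + r i1 *: t)).
      by apply/rowP => j; rewrite !mxE Ha Ha'.
    exact: row_sub.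
  have -> : row i (act p) = 0 by apply/rowP => j; rewrite !mxE Ha.
  exact: sub0mx.
apply: rank_ltmx; rewrite ltmxE Hsub /=; apply/negP => Hle.
have Hr := submx_trans (row_sub i1 (act (p + r i1 *: t))) Hle.
case/submxP: Hr => D HD.
have : (row i1 (act (p + r i1 *: t)) *m t) 0 0 = 0.
  by rewrite HD -mulmxA Ht mulmx0 mxE.
rewrite -row_mul mxE act_mul Hact1 => h.
by rewrite h ltxx in Hi1.
Qed.


Lemma decomp p : PP p -> (\rank (act p) < n)%N ->
  exists p1 p2 l, [/\ PP p1, PP p2, p1 != p, p2 != p & 0 < l < 1] /\
    (p = l *: p1 + (1 - l) *: p2 /\
    ((\rank (act p) < \rank (act p1))%N /\ (\rank (act p) < \rank (act p2))%N)).
Proof.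
move=> Hp Hr.
case: (kernel_vec Hr) => t [nz Ht].
case: (step_lemma Hp Ht nz) => s1 [Hs1 Hp1 Hr1].
have Ht' : act p *m (- t) = 0 by rewrite mulmxN Ht oppr0.
have nz' : - t != 0 by rewrite oppr_eq0.
case: (step_lemma Hp Ht' nz') => s2 [Hs2 Hp2 Hr2].
exists (p + s1 *: t), (p + s2 *: - t), (s2 / (s1 + s2)); split; last split => //; first split => //.
- rewrite -subr_eq0 addrC addKr scaler_eq0 negb_or nz andbT; exact: lt0r_neq0.
- rewrite -subr_eq0 addrC addKr scaler_eq0 negb_or nz' andbT; exact: lt0r_neq0.
- apply/andP; split; first by apply: divr_gt0 => //; lra.
  by rewrite ltr_pdivrMr; lra.
- apply/matrixP => i j; rewrite !mxE; field; apply/eqP; lra.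
Qed.

Lemma rank_vertex p : PP p -> \rank (act p) = n -> is_vertex PP p.
Proof.
move=> Hp Hr; split => //.
exists ((act p)^T *m const_mx 1) => y Hy Hne.
have Hd : forall z, dotv ((act p)^T *m const_mx 1) z =
    \sum_i (if active p i then (Ar *m z) i 0 else 0).
  move=> z; rewrite dotvE trmx_mul trmxK -mulmxA mxE.
  by apply: eq_bigr => i _; rewrite act_mul !mxE mul1r.
rewrite !Hd.
have Hle : forall i, (if active p i then (Ar *m y) i 0 else 0) <=
                     (if active p i then (Ar *m p) i 0 else 0).
  move=> i; case Ha: (active p i) => //; move/eqP: Ha => ->; exact: Hy.
case: (pickP (fun i => (if active p i then (Ar *m y) i 0 else 0) !=
                     (if active p i then (Ar *m p) i 0 else 0))) => [i0 Hi0|H].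
  rewrite [X in X < _](bigD1 i0) //= [X in _ < X](bigD1 i0) //=.
  apply: ltr_leD; first by rewrite lt_neqAle Hi0 Hle.
  by apply: ler_sum => i _; exact: Hle.
exfalso; apply: Hne.
have : act p *m (y - p) = 0.
  apply/eqP; rewrite mulmxBr subr_eq0; apply/eqP/matrixP => i j; rewrite ord1 !act_mul.
  by move/negbFE/eqP: (H i).
move/(full_inj Hr)/eqP; rewrite subr_eq0 => /eqP //.
Qed.

Lemma vertex_rank p : is_vertex PP p -> \rank (act p) = n.
Proof.
move=> [Hp [c Hc]].
case: (ltngtP (\rank (act p)) n) => // [Hlt|Hgt]; last first.
  by move: (rank_leq_col (act p)); rewrite leqNgt Hgt.
case: (decomp Hp Hlt) => p1 [p2 [l [[H1 H2 N1 N2 Hl] [Hpe _]]]].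
have h1 := Hc _ H1 (elimN eqP N1).
have h2 := Hc _ H2 (elimN eqP N2).
have e := dotv_comb c l p1 p2; rewrite -Hpe in e; case/andP: Hl => ? ?; clear Hpe.
exfalso; nra.
Qed.

Lemma vertex_ind (Q : 'cV[R]_n -> Prop) :
  (forall v, is_vertex PP v -> Q v) ->
  (forall p1 p2 l, PP p1 -> PP p2 -> 0 < l < 1 -> Q p1 -> Q p2 -> Q (l *: p1 + (1 - l) *: p2)) ->
  forall p, PP p -> Q p.
Proof.
move=> Hv Hc.
suff : forall r p, PP p -> (n - \rank (act p) <= r)%N -> Q p.
  by move=> H p Hp; apply: (H (n - \rank (act p))%N).
elim => [|r IH] p Hp Hr.
  apply: Hv; apply: rank_vertex => //.
  by apply/eqP; rewrite eqn_leq rank_leq_col /=; lia.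
case: (ltngtP (\rank (act p)) n) => [Hlt||Heq]; last first.
- by apply: Hv; apply: rank_vertex.
- by move: (rank_leq_col (act p)); rewrite leqNgt => /negP.
case: (decomp Hp Hlt) => p1 [p2 [l [[H1 H2 _ _ Hl] [Hpe [R1 R2]]]]].
have r1 := rank_leq_col (act p1); have r2 := rank_leq_col (act p2).
have I1 : (n - \rank (act p1) <= r)%N by lia.
have I2 : (n - \rank (act p2) <= r)%N by lia.
rewrite Hpe; apply: Hc => //; exact: IH.
Qed.

Lemma vertex_extreme v p1 p2 l : is_vertex PP v -> PP p1 -> PP p2 -> 0 < l < 1 ->
  v = l *: p1 + (1 - l) *: p2 -> p1 = v \/ p2 = v.
Proof.
move=> [Hv [c Hc]] H1 H2 Hl Hve.
case: (eqVneq p1 v) => [->|N1]; first by left.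
case: (eqVneq p2 v) => [->|N2]; first by right.
have h1 := Hc _ H1 (elimN eqP N1).
have h2 := Hc _ H2 (elimN eqP N2).
have e := dotv_comb c l p1 p2; rewrite -Hve in e; case/andP: Hl => ? ?; clear Hve.
exfalso; nra.
Qed.

Lemma edge_crit x y (H : 'cV[R]_n) : is_vertex PP x -> is_vertex PP y -> x != y ->
  dotv H x = dotv H y ->
  (forall z, is_vertex PP z -> z != x -> z != y -> dotv H z < dotv H x) ->
  is_edge PP x y.
Proof.
move=> Vx Vy Nxy Exy Hz.
have Q : forall z, PP z -> dotv H z <= dotv H x /\
   (dotv H z = dotv H x -> exists t : R, 0 <= t <= 1 /\ z = (1 - t) *: x + t *: y).
  apply: vertex_ind.
  + move=> v Vv; case: (eqVneq v x) => [->|Nx].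
      split => // _; exists 0; split; first by rewrite lexx ler01.
      by rewrite subr0 scale1r scale0r addr0.
    case: (eqVneq v y) => [->|Ny].
      split; first by rewrite Exy.
      move=> _; exists 1; split; first by rewrite lexx ler01.
      by rewrite subrr scale0r scale1r add0r.
    have := Hz _ Vv Nx Ny; split; [exact: ltW|move=> e; exfalso; lra].
  + move=> p1 p2 l _ _ Hl [a1 b1] [a2 b2]; rewrite dotv_comb; case/andP: Hl => ? ?.
    split; first by nra.
    move=> e.
    have e1 : dotv H p1 = dotv H x by nra.
    have e2 : dotv H p2 = dotv H x by nra.
    case: (b1 e1) => t1 [/andP [t10 t11] ->]; case: (b2 e2) => t2 [/andP [t20 t21] ->].
    exists (l * t1 + (1 - l) * t2); split; first by apply/andP; split; nra.
    apply/matrixP => i j; rewrite !mxE; ring.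
split; first by case: Vx.
split; first by case: Vy.
split; first by apply/eqP.
exists H; split; [|split => //].
- by move=> z Pz; case: (Q z Pz).
- by move=> z Pz; case: (Q z Pz).
Qed.


Hypothesis Hlat : lattice_vertices PP.

Definition cand : seq 'cV[R]_n :=
  [seq \col_(i < n) (((f i : 'I_k.+1) : nat)%:R : R) | f : {ffun 'I_n -> 'I_k.+1} <- enum {ffun 'I_n -> 'I_k.+1}].
Definition VL : seq 'cV[R]_n := [seq z <- cand | boolp.asbool (is_vertex PP z)].

Lemma memVL z : (z \in VL) <-> is_vertex PP z.
Proof.
split; first by rewrite mem_filter => /andP [/boolp.asboolP].
move=> Vz; rewrite mem_filter; apply/andP; split; first exact/boolp.asboolP.
have Hc : forall i, exists j : 'I_k.+1, z i 0 = (j : nat)%:R.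
  move=> i; case: (Hlat Vz i) => zi Hzi.
  have := @Hbox _ (proj1 Vz) i; rewrite Hzi => /andP [h0 h1].
  rewrite ler0z in h0.
  have Ez : zi = (`|zi|%N)%:Z by rewrite gez0_abs.
  have Hl : (`|zi|%N < k.+1)%N.
    rewrite Ez in h1; move: h1; rewrite -[k%:R]/((k%:Z)%:~R) ler_int lez_nat; lia.
  exists (Ordinal Hl) => /=; by rewrite {1}Ez.
case: (fin_all_exists Hc) => f Hf.
apply/mapP; exists [ffun i => f i]; first by rewrite mem_enum.
by apply/matrixP => i j; rewrite ord1 mxE ffunE Hf.
Qed.

Lemma edge_lemma x g c0 z0 : is_vertex PP x ->
  (forall z, is_vertex PP z -> dotv g z <= dotv g x) ->
  is_vertex PP z0 -> dotv g z0 = dotv g x -> z0 != x -> dotv c0 x < dotv c0 z0 ->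
  exists y, [/\ is_vertex PP y, y != x, dotv g y = dotv g x, dotv c0 x < dotv c0 y &
    is_edge PP x y].
Proof.
move=> Vx Hg Vz0 Gz0 Nz0 Cz0.
have Vx' := Vx; case: Vx' => Px [hx Hhx].
pose dl z := dotv hx x - dotv hx z.
have Hdl : forall z, PP z -> z != x -> 0 < dl z.
  by move=> z Pz Nz; have := Hhx _ Pz (elimN eqP Nz); rewrite /dl; lra.
pose pz z := (dl z)^-1 *: (z - x).
have Hpzd : forall (c : 'cV[R]_n) z, PP z -> z != x ->
    dotv c (pz z) = (dotv c z - dotv c x) / dl z.
  by move=> c z Pz Nz; rewrite /pz dotvZr dotvBr mulrC.
have pz_inj : forall z1 z2, is_vertex PP z1 -> is_vertex PP z2 -> z1 != x -> z2 != x ->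
    pz z1 = pz z2 -> z1 = z2.
  move=> z1 z2 V1 V2 N1 N2 Hp.
  have d1 := Hdl _ (proj1 V1) N1; have d2 := Hdl _ (proj1 V2) N2.
  set r := dl z1 / dl z2.
  have hr : 0 < r by apply: divr_gt0.
  have E : forall i, z1 i 0 = x i 0 + r * (z2 i 0 - x i 0).
    move=> i; have := congr1 (fun M : 'cV[R]_n => M i 0) Hp; rewrite /pz !mxE => h.
    have -> : z1 i 0 = x i 0 + dl z1 * ((dl z1)^-1 * (z1 i 0 - x i 0)).
      by field; apply: lt0r_neq0.
    by rewrite h /r; field; apply: lt0r_neq0.
  case: (ltgtP r 1) => Hr1.
  - have Hcomb : z1 = r *: z2 + (1 - r) *: x.
      by apply/matrixP => i j; rewrite ord1 !mxE E; ring.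
    have hl : 0 < r < 1 by apply/andP.
    case: (vertex_extreme V1 (proj1 V2) Px hl Hcomb) => // e.
    by rewrite e eqxx in N1.
  - have Hcomb : z2 = r^-1 *: z1 + (1 - r^-1) *: x.
      apply/matrixP => i j; rewrite ord1 !mxE E; field; exact: lt0r_neq0.
    have hl : 0 < r^-1 < 1 by rewrite invr_gt0 hr /= invf_lt1.
    case: (vertex_extreme V2 (proj1 V1) Px hl Hcomb) => // e.
    by rewrite e eqxx in N2.
  - by apply/matrixP => i j; rewrite ord1 E Hr1 mul1r addrC subrK.
pose Sd := [seq z <- VL | (dotv g z == dotv g x) && (z != x)].
have HSd : forall z, z \in Sd <-> [/\ is_vertex PP z, dotv g z = dotv g x & z != x].
  move=> z; rewrite mem_filter; split.
    by move=> /andP [/andP [/eqP -> ->] /memVL].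
  by case=> /memVL -> -> ->; rewrite eqxx.
have nQ : map pz Sd != [::].
  have : pz z0 \in map pz Sd by apply: map_f; apply/HSd.
  by case: (map pz Sd).
case: (extreme_pt c0 nQ) => q [Hq Hmax [kk Hkk]].
case/mapP: Hq => y Hy Eq; case/HSd: (Hy) => Vy Gy Ny.
have Py := proj1 Vy.
have dy := Hdl _ Py Ny.
have Cy : dotv c0 x < dotv c0 y.
  have := Hmax (pz z0) (map_f _ (proj2 (HSd z0) (And3 Vz0 Gz0 Nz0))).
  rewrite Eq (Hpzd _ _ Py Ny) (Hpzd _ _ (proj1 Vz0) Nz0).
  have d0 := Hdl _ (proj1 Vz0) Nz0.
  have h0 : 0 < (dotv c0 z0 - dotv c0 x) / dl z0 by apply: divr_gt0 => //; lra.
  move=> h; have : 0 < (dotv c0 y - dotv c0 x) / dl y by lra.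
  by rewrite pmulr_lgt0 ?invr_gt0 // subr_gt0.
pose be := dotv kk (pz y).
pose h' := kk + be *: hx.
have Hh' : forall z, PP z -> z != x -> dotv h' z - dotv h' x = dl z * (dotv kk (pz z) - be).
  move=> z Pz Nz; rewrite Hpzd // /h' !dotvDl !dotvZl /dl.
  field; apply: lt0r_neq0; exact: Hdl.
pose Sn := [seq z <- VL | dotv g z != dotv g x].
have Hpos : forall z, z \in Sn -> 0 < dotv g x - dotv g z.
  move=> z; rewrite mem_filter => /andP [Ne /memVL Vz]; have := Hg _ Vz.
  by rewrite le_eqVlt (negbTE Ne) /=; lra.
have [e He Hee] := @eps_lemma _ _ Sn (fun z => dotv g x - dotv g z)
                     (fun z => dotv h' x - dotv h' z) Hpos.
exists y; split; [exact: Vy|exact: Ny|exact: Gy|exact: Cy|].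
have Nxy : x != y by rewrite eq_sym.
apply: (@edge_crit x y (e *: h' + g) Vx Vy Nxy).
  rewrite !dotvDl !dotvZl Gy; congr (_ * _ + _).
  by apply/eqP; rewrite eq_sym -subr_eq0 Hh' // /be subrr mulr0.
move=> z Vz Nx Nyz; rewrite !dotvDl !dotvZl.
case: (eqVneq (dotv g z) (dotv g x)) => Gz.
  have Hz : z \in Sd by apply/HSd.
  have Npz : pz z != q.
    by rewrite Eq; apply/negP => /eqP /(pz_inj _ _ Vz Vy Nx Ny) /eqP; rewrite (negbTE Nyz).
  have := Hkk _ (map_f _ Hz) Npz; rewrite -/be Eq => hk.
  have := Hh' _ (proj1 Vz) Nx; have := Hdl _ (proj1 Vz) Nx.
  rewrite Gz /be => h1 h2.
  have h3 : dotv h' z - dotv h' x < 0 by rewrite h2; nra.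
  nra.
have Hz : z \in Sn by rewrite mem_filter Gz; apply/memVL.
have := Hee _ Hz; have := neg_norm_le (dotv h' x - dotv h' z); nra.
Qed.


Lemma shadow_step a c x mu : is_vertex PP x -> 0 <= mu ->
  (forall z, is_vertex PP z -> dotv a z + mu * dotv c z <= dotv a x + mu * dotv c x) ->
  (forall z, is_vertex PP z -> dotv c x < dotv c z -> dotv a z < dotv a x) ->
  (exists2 z, is_vertex PP z & dotv c x < dotv c z) ->
  exists y mu', [/\ is_edge PP x y, dotv c x < dotv c y, dotv a y < dotv a x & is_vertex PP y] /\
   [/\ 0 <= mu',
     (forall z, is_vertex PP z -> dotv a z + mu' * dotv c z <= dotv a y + mu' * dotv c y) &
     (forall z, is_vertex PP z -> dotv c y < dotv c z -> dotv a z < dotv a y)].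
Proof.
move=> Vx Hmu I1 I2 [z0 Vz0 Cz0].
pose F z := (dotv a x - dotv a z) / (dotv c z - dotv c x).
have [z1 [Hz1 Cz1 Hmin]] := @seq_argmin R _ VL (fun z => dotv c x < dotv c z) F
  (ex_intro2 _ _ z0 (proj2 (memVL z0) Vz0) Cz0).
have Vz1 : is_vertex PP z1 by apply/memVL.
set ms := F z1.
have Az1 := I2 _ Vz1 Cz1.
have Hms : 0 < ms by apply: divr_gt0; lra.
have Hmsz : forall z, is_vertex PP z -> dotv c x < dotv c z ->
    ms * (dotv c z - dotv c x) <= dotv a x - dotv a z.
  move=> z Vz Cz; have := Hmin z (proj2 (memVL z) Vz) Cz.
  by rewrite /F -/ms ler_pdivlMr ?subr_gt0.
have Ems : ms * (dotv c z1 - dotv c x) = dotv a x - dotv a z1.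
  by rewrite /ms /F divfK // subr_eq0 gt_eqF.
have Hmu' : mu <= ms.
  have := I1 _ Vz1 => h.
  have : mu * (dotv c z1 - dotv c x) <= ms * (dotv c z1 - dotv c x) by nra.
  move=> h2; rewrite -subr_ge0; nra.
pose g := a + ms *: c.
have Hg : forall z, dotv g z = dotv a z + ms * dotv c z.
  by move=> z; rewrite /g dotvDl dotvZl.
have Gmax : forall z, is_vertex PP z -> dotv g z <= dotv g x.
  move=> z Vz; rewrite !Hg.
  case: (ltP (dotv c x) (dotv c z)) => Cz.
    have := Hmsz z Vz Cz; nra.
  have := I1 z Vz; nra.
have Nz1 : z1 != x by apply/eqP => e; rewrite e ltxx in Cz1.
have Gz1 : dotv g z1 = dotv g x by rewrite !Hg; nra.
case: (edge_lemma Vx Gmax Vz1 Gz1 Nz1 Cz1) => y [Vy Ny Gy Cy Ey].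
have Ay : dotv a y < dotv a x by move: Gy; rewrite !Hg; nra.
exists y, ms; split; split => //; first exact: ltW.
  by move=> z Vz; rewrite -!Hg Gy; exact: Gmax.
move=> z Vz Cz; have := Gmax z Vz; rewrite -Gy !Hg; nra.
Qed.

Lemma path_lemma a c w : generic_obj PP c -> c_max_vertex PP c w ->
  (forall z, is_vertex PP z -> exists zz : int, dotv a z = zz%:~R) ->
  forall N x mu, is_vertex PP x -> 0 <= mu ->
  (forall z, is_vertex PP z -> dotv a z + mu * dotv c z <= dotv a x + mu * dotv c x) ->
  (forall z, is_vertex PP z -> dotv c x < dotv c z -> dotv a z < dotv a x) ->
  dotv a x - dotv a w <= N%:R ->
  exists L, (L <= N)%N /\ monotone_path PP c x w L.
Proof.
move=> Gen [Vw Cw] Hint.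
elim => [|N IH] x mu Vx Hmu I1 I2 HN.
all: case: (boolP (has (fun z => dotv c x < dotv c z) VL)) => Hh.
- case/hasP: Hh => z /memVL Vz Cz.
  have Cwx : dotv c x < dotv c w by have := Cw z (proj1 Vz); lra.
  have := I2 _ Vw Cwx; lra.
- suff -> : x = w by exists 0%N; split => //; exists (fun _ => w); split => //.
  apply/eqP/negP => Nxw.
  have Cmax : forall z, is_vertex PP z -> dotv c z <= dotv c x.
    move=> z Vz; rewrite leNgt; apply/negP => Cz; case/hasP: Hh; exists z => //; exact/memVL.
  have Ewx : dotv c w = dotv c x by have := Cmax w Vw; have := Cw x (proj1 Vx); lra.
  have Nwx : w != x by rewrite eq_sym; apply/negP.
  have Cxw : dotv (w - x) x < dotv (w - x) w.
    have := @dotv_sq_gt0 _ _ (w - x); rewrite subr_eq0 dotvBr => h; have := h Nwx; lra.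
  case: (edge_lemma Vx Cmax Vw Ewx Nwx Cxw) => y [_ _ Ey _ Exy].
  by apply: (Gen _ _ Exy).
- case/hasP: Hh => z /memVL Vz Cz.
  case: (shadow_step Vx Hmu I1 I2 (ex_intro2 _ _ z Vz Cz)) => y [mu' [[Exy Cxy Axy Vy] [Hmu' I1' I2']]].
  case: (Hint _ Vx) => zx Ezx; case: (Hint _ Vy) => zy Ezy.
  have Hy1 : dotv a y <= dotv a x - 1.
    move: Axy; rewrite Ezx Ezy ltr_int => h.
    have : zy <= zx - 1 by lia.
    by rewrite -(ler_int R) intrB.
  have HN' : dotv a y - dotv a w <= N%:R by move: HN; rewrite -natr1; lra.
  case: (IH y mu' Vy Hmu' I1' I2' HN') => L [HL [f [f0 [fL Hf]]]].
  exists L.+1; split => //.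
  exists (fun i => if i is i'.+1 then f i' else x); split => //; split => //.
  case=> [|i] Hi /=; first by rewrite f0.
  exact: Hf.
- suff -> : x = w by exists 0%N; split => //; exists (fun _ => w); split => //.
  apply/eqP/negP => Nxw.
  have Cmax : forall z, is_vertex PP z -> dotv c z <= dotv c x.
    move=> z Vz; rewrite leNgt; apply/negP => Cz; case/hasP: Hh; exists z => //; exact/memVL.
  have Ewx : dotv c w = dotv c x by have := Cmax w Vw; have := Cw x (proj1 Vx); lra.
  have Nwx : w != x by rewrite eq_sym; apply/negP.
  have Cxw : dotv (w - x) x < dotv (w - x) w.
    have := @dotv_sq_gt0 _ _ (w - x); rewrite subr_eq0 dotvBr => h; have := h Nwx; lra.
  case: (edge_lemma Vx Cmax Vw Ewx Nwx Cxw) => y [_ _ Ey _ Exy].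
  by apply: (Gen _ _ Exy).
Qed.


Lemma unbounded p t : PP p -> t != 0 -> (forall i, (Ar *m t) i 0 <= 0) -> False.
Proof.
move=> Hp nz H.
have Hall : forall s, 0 <= s -> PP (p + s *: t).
  move=> s Hs i; rewrite ArD ArZ.
  have h1 := Hp i; have h2 := H i.
  have : s * (Ar *m t) i 0 <= 0 by rewrite mulr_ge0_le0.
  lra.
case: (nonzero_coord nz) => j Hj.
have hk : (0:R) <= k%:R := ler0n _ _.
move: Hj; rewrite neq_lt => /orP [] Hj.
  have Hs : (0:R) <= (k%:R + 1) / (- t j 0) by apply: divr_ge0; lra.
  have := @Hbox _ (Hall _ Hs) j; rewrite !mxE.
  have -> : (k%:R + 1) / - t j 0 * t j 0 = - (k%:R + 1) by field; apply/eqP; lra.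
  have := @Hbox _ Hp j; lra.
have Hs : (0:R) <= (k%:R + 1) / (t j 0) by apply: divr_ge0; lra.
have := @Hbox _ (Hall _ Hs) j; rewrite !mxE.
have -> : (k%:R + 1) / t j 0 * t j 0 = (k%:R + 1) by field; apply/eqP; lra.
have := @Hbox _ Hp j; lra.
Qed.

Lemma sum_le_eq (I : finType) (F G : I -> R) :
  (forall i, F i <= G i) -> \sum_i F i = \sum_i G i -> forall i, F i = G i.
Proof.
move=> Hle Heq i; apply/eqP; apply/negPn/negP => Hne.
have : \sum_i F i < \sum_i G i.
  rewrite [X in X < _](bigD1 i) //= [X in _ < X](bigD1 i) //=.
  apply: ltr_leD; first by rewrite lt_neqAle Hne Hle.
  by apply: ler_sum => j _; exact: Hle.
by rewrite Heq ltxx.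
Qed.

Lemma inV d x0 (X : 'I_d -> 'cV[R]_n) :
  row_free (\matrix_(i < d) (X i - x0)^T) ->
  (forall x1 (X1 : 'I_d.+1 -> 'cV[R]_n), PP x1 -> (forall i, PP (X1 i)) -> ~~ aff_indep_from x1 X1) ->
  PP x0 -> (forall i, PP (X i)) ->
  forall y, PP y -> ((y - x0)^T <= \matrix_(i < d) (X i - x0)^T)%MS.
Proof.
move=> Hf Hmax Px0 PX y Py; set M := \matrix_(i < d) (X i - x0)^T.
apply/negPn/negP => Hn.
pose X1 := fun i : 'I_d.+1 => if unlift ord_max i is Some j then X j else y.
have PX1 : forall i, PP (X1 i) by move=> i; rewrite /X1; case: (unlift _ i).
apply: (negP (Hmax x0 X1 Px0 PX1)); rewrite /aff_indep_from.
set B := \matrix_(i < d.+1) (X1 i - x0)^T.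
have HMB : (M <= B)%MS.
  apply/row_subP => i; apply: (@eq_row_sub _ _ _ _ _ (lift ord_max i)).
  by apply/rowP => j; rewrite !mxE /X1 liftK.
have HyB : ((y - x0)^T <= B)%MS.
  apply: (@eq_row_sub _ _ _ _ _ ord_max).
  by apply/rowP => j; rewrite !mxE /X1 unlift_none.
have Hlt : (M < B)%MS.
  rewrite ltmxE HMB /=; apply/negP => HBM; apply: (negP Hn); exact: submx_trans HyB HBM.
have := rank_ltmx Hlt; move: Hf; rewrite /row_free => /eqP ->.
rewrite /row_free => h; rewrite eqn_leq rank_leq_row; exact: h.
Qed.


Lemma face_at_v d v : aff_dim PP d -> is_vertex PP v ->
  exists (aZ : 'cV[int]_n) (a : 'cV[R]_n),
   [/\ a = map_mx (fun z : int => z%:~R) aZ,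
       (forall l, `|aZ l 0| <= (d.-1 * mx_inf_norm A)%N%:Z),
       (forall y, PP y -> dotv a y <= dotv a v) &
   ((forall z, is_vertex PP z -> z != v -> dotv a z < dotv a v) \/
    exists u, [/\ is_vertex PP u, u != v, is_edge PP v u, dotv a u = dotv a v &
      forall z, is_vertex PP z -> z != v -> z != u -> dotv a z < dotv a v])].
Proof.
move=> [[x0 [Px0 [X [PX Hind]]]] Hmax] Vv.
set M := \matrix_(i < d) (X i - x0)^T.
have HinV := @inV d x0 X Hind Hmax Px0 PX.
have Hrv := vertex_rank Vv.
set B := act v.
set N := B *m M^T.
have HN : \rank N = d.
  rewrite -mxrank_tr /N trmx_mul trmxK mxrankMfree; first exact: (eqP Hind).
  by rewrite /row_free mxrank_tr Hrv.
set p := d.-1.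
have Hp : (p <= \rank N)%N by rewrite HN leq_pred.
pose f' := fun j : 'I_p => maxrankfun N (widen_ord Hp j).
pose eZ := fun (j : 'I_p) (l : 'I_n) => if active v (f' j) then A (f' j) l else 0.
pose Rm : 'M[R]_(p, n) := \matrix_(j, l) (eZ j l)%:~R.
have RmE : Rm = rowsub f' B.
  apply/matrixP => j l; rewrite !mxE /eZ; case: ifP => _ //; by rewrite mxE.
pose aZ : 'cV[int]_n := \col_l (\sum_j eZ j l).
pose a : 'cV[R]_n := map_mx (fun z : int => z%:~R) aZ.
exists aZ, a.
have HRy : forall y j, (Rm *m y) j 0 = if active v (f' j) then (Ar *m y) (f' j) 0 else 0.
  by move=> y j; rewrite RmE mul_rowsub_mx mxE act_mul.
have Hda : forall y, dotv a y = \sum_j (Rm *m y) j 0.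
  move=> y; rewrite /dotv.
  under eq_bigr do rewrite !mxE rmorph_sum mulr_suml.
  rewrite exchange_big /=; apply: eq_bigr => j _; rewrite mxE.
  by apply: eq_bigr => l _; rewrite mxE.
have Hle_j : forall y, PP y -> forall j, (Rm *m y) j 0 <= (Rm *m v) j 0.
  move=> y Py j; rewrite !HRy; case Ha: (active v (f' j)) => //.
  by move/eqP: Ha => ->; exact: Py.
have Hle : forall y, PP y -> dotv a y <= dotv a v.
  by move=> y Py; rewrite !Hda; apply: ler_sum => j _; exact: Hle_j.
have Heq : forall y, PP y -> dotv a y = dotv a v -> Rm *m (y - v) = 0.
  move=> y Py; rewrite !Hda => e.
  have := sum_le_eq (Hle_j _ Py) e => h.
  by apply/eqP; rewrite mulmxBr subr_eq0; apply/eqP/matrixP => j l; rewrite ord1; exact: h j.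
have HrMR : \rank (M *m Rm^T) = p.
  rewrite -mxrank_tr trmx_mul trmxK RmE mul_rowsub_mx.
  set NF := rowsub (maxrankfun N) N.
  have -> : rowsub f' N = rowsub (widen_ord Hp) NF by apply/matrixP => i j; rewrite !mxE.
  rewrite rowsubE mxrankMfree; last exact: maxrowsub_free.
  set S := rowsub (widen_ord Hp) (1%:M : 'M[R]_(\rank N)).
  apply/eqP; rewrite eqn_leq rank_leq_row /=.
  have HS : S *m S^T = 1%:M.
    apply/matrixP => i j; rewrite !mxE.
    rewrite (bigD1 (widen_ord Hp i)) //= big1 ?addr0.
      rewrite !mxE eqxx mul1r.
      have -> : (widen_ord Hp j == widen_ord Hp i) = (i == j).
        by rewrite eq_sym -val_eqE /= val_eqE.
      by [].
    by move=> l Hl; rewrite !mxE eq_sym (negbTE Hl) mul0r.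
  by have := mxrankM_maxl S S^T; rewrite HS mxrank1.
set K := kermx (M *m Rm^T).
have HK : (\rank K <= 1)%N by rewrite /K mxrank_ker HrMR /p; lia.
have Hkey : forall y, PP y -> dotv a y = dotv a v ->
    exists s : 'rV[R]_d, (y - v)^T = s *m M /\ (s <= K)%MS.
  move=> y Py Ey.
  have Et : (y - v)^T = (y - x0)^T + (-1) *: (v - x0)^T.
    by apply/matrixP => i j; rewrite !mxE; ring.
  have Ht : ((y - v)^T <= M)%MS.
    by rewrite Et; apply: addmx_sub; [exact: (HinV _ Py)|apply: scalemx_sub; exact: (HinV _ (proj1 Vv))].
  case/submxP: Ht => s Hs; exists s; split => //.
  by apply/sub_kermxP; rewrite mulmxA -Hs -trmx_mul Heq // trmx0.
have Hcol : forall y1 y, PP y1 -> dotv a y1 = dotv a v -> y1 != v ->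
    PP y -> dotv a y = dotv a v -> exists al : R, y = v + al *: (y1 - v).
  move=> y1 y P1 E1 N1 Py Ey.
  case: (Hkey _ P1 E1) => s1 [Hs1 Ks1]; case: (Hkey _ Py Ey) => s2 [Hs2 Ks2].
  have nz1 : s1 != 0.
    apply/negP => /eqP e; move: Hs1; rewrite e mul0mx => /eqP.
    rewrite -trmx0 (inj_eq (@trmx_inj _ _ _)) subr_eq0 => /eqP e1.
    by rewrite e1 eqxx in N1.
  have HL := mxrank_leqif_eq Ks1.
  have h1 : \rank s1 = 1%N by rewrite rank_rV nz1.
  have h2 : (\rank s1 <= \rank K)%N := HL.1.
  have : (\rank s1 == \rank K) by apply/eqP; lia.
  rewrite HL.2 => /andP [_ HKs1].
  case/sub_rVP: (submx_trans Ks2 HKs1) => al Hal.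
  exists al; apply/matrixP => i j; rewrite ord1.
  have := congr1 (fun Mx : 'rV[R]_n => Mx 0 i) Hs2.
  rewrite Hal -scalemxAl -Hs1 !mxE => h; rewrite -h; ring.
have Hbound : forall l, `|aZ l 0| <= (d.-1 * mx_inf_norm A)%N%:Z.
  move=> l; rewrite mxE.
  apply: le_trans (ler_norm_sum _ _ _) _.
  have Hb : forall j : 'I_p, `|eZ j l| <= (mx_inf_norm A)%:Z.
    move=> j; rewrite /eZ; case: ifP => _; last by rewrite normr0.
    rewrite -abszE lez_nat.
    apply: (@leq_trans (\max_(j0 < n) `|A (f' j) j0|%N)).
      exact: (@leq_bigmax _ (fun j0 => `|A (f' j) j0|%N) l).
    exact: (@leq_bigmax _ (fun i => \max_(j0 < n) `|A i j0|%N) (f' j)).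
  apply: le_trans (ler_sum _ (fun j _ => Hb j)) _.
  rewrite sumr_const card_ord; lia.
case: (boolp.pselect (exists y1, [/\ PP y1, dotv a y1 = dotv a v & y1 != v])) => Hex; last first.
  split => //.
  left => z Vz Nz; have := Hle _ (proj1 Vz); rewrite le_eqVlt => /orP [/eqP e|//].
  by exfalso; apply: Hex; exists z; split => //; case: Vz.
case: Hex => y1 [P1 E1 N1].
set g := y1 - v.
have nzg : g != 0 by rewrite subr_eq0.
have Hag : dotv a g = 0 by rewrite dotvBr E1 subrr.
have HaP : forall al, dotv a (v + al *: g) = dotv a v.
  by move=> al; rewrite dotvDr dotvZr Hag mulr0 addr0.
have Hcol' : forall y, PP y -> dotv a y = dotv a v -> exists al, y = v + al *: g.
  by move=> y Py Ey; exact: (Hcol y1 y P1 E1 N1 Py Ey).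
have Hy1 : y1 = v + 1 *: g by rewrite scale1r /g addrC subrK.
have Hsg0 : forall al, v + al *: g = v -> al = 0.
  move=> al e; have : al *: g = 0 by apply: (addrI v); rewrite addr0.
  by move/eqP; rewrite scaler_eq0 (negbTE nzg) orbF => /eqP.
have Hneg : forall al, PP (v + al *: g) -> 0 <= al.
  move=> al Pal; rewrite leNgt; apply/negP => Hal.
  set l := (1 - al)^-1.
  have hl : 0 < l < 1.
    apply/andP; split; first by rewrite invr_gt0; lra.
    by rewrite invf_lt1; lra.
  have Hc : v = l *: (v + al *: g) + (1 - l) *: y1.
    rewrite {1}Hy1; apply/matrixP => i j; rewrite !mxE /l; field; apply/eqP; lra.
  case: (vertex_extreme Vv Pal P1 hl Hc) => e.
    by have := Hsg0 _ e; lra.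
  by rewrite e eqxx in N1.
have [i0 Hi0] : exists i, 0 < (Ar *m g) i 0.
  case: (pickP (fun i => 0 < (Ar *m g) i 0)) => [i Hi|H]; first by exists i.
  by exfalso; apply: (unbounded (proj1 Vv) nzg) => i; rewrite leNgt H.
pose r i := (b i 0 - (Ar *m v) i 0) / (Ar *m g) i 0.
have [i1 [_ Hi1 Hmin]] := @seq_argmin R _ (enum 'I_m) (fun i => 0 < (Ar *m g) i 0) r
  (ex_intro2 _ _ i0 (mem_enum _ i0) Hi0).
set ss := r i1.
have Hcon : forall al i, PP (v + al *: g) -> 0 < (Ar *m g) i 0 -> al <= r i.
  move=> al i Pal Hi; have := Pal i; rewrite ArD ArZ /r ler_pdivlMr //; lra.
have Hss1 : 1 <= ss by apply: Hcon => //; rewrite -Hy1.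
set u := v + ss *: g.
have Pu : PP u.
  move=> i; rewrite ArD ArZ; case: (leP ((Ar *m g) i 0) 0) => Hi.
    have h2 : (Ar *m v) i 0 <= b i 0 := (proj1 Vv) i.
    have h0 : 0 <= ss by lra.
    have : ss * (Ar *m g) i 0 <= 0 by rewrite mulr_ge0_le0.
    lra.
  have h : ss * (Ar *m g) i 0 <= b i 0 - (Ar *m v) i 0.
    by rewrite -ler_pdivlMr //; exact: Hmin i (mem_enum _ i) Hi.
  have h2 : (Ar *m v) i 0 <= b i 0 := (proj1 Vv) i.
  lra.
have Au1 : (Ar *m u) i1 0 = b i1 0.
  by rewrite ArD ArZ /ss /r; field; exact: lt0r_neq0.
have Hau : dotv a u = dotv a v := HaP ss.
have Nuv : u != v.
  by apply/negP => /eqP e; have := Hsg0 _ e; lra.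
have Hseg : forall y, PP y -> dotv a y = dotv a v ->
    exists t : R, 0 <= t <= 1 /\ y = (1 - t) *: v + t *: u.
  move=> y Py Ey; case: (Hcol' y Py Ey) => al Hal.
  have Pal : PP (v + al *: g) by rewrite -Hal.
  have h0 := Hneg _ Pal; have h1 : al <= ss := Hcon _ _ Pal Hi1.
  exists (al / ss); split.
    apply/andP; split; first by apply: divr_ge0; lra.
    by rewrite ler_pdivrMr; lra.
  rewrite Hal /u; apply/matrixP => i j; rewrite !mxE; field; apply/eqP; lra.
have Vu : is_vertex PP u.
  split => //; exists (a + (row i1 Ar)^T) => y Py Nyu.
  have Hr : forall z, dotv ((row i1 Ar)^T) z = (Ar *m z) i1 0.
    by move=> z; rewrite dotvE trmxK -row_mul mxE.
  rewrite !dotvDl !Hr Au1 Hau.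
  have h1 := Hle _ Py; have h2 := Py i1.
  case: (ltP (dotv a y) (dotv a v)) => h3; first lra.
  have Ey : dotv a y = dotv a v by apply/eqP; rewrite eq_le h1 h3.
  case: (ltP ((Ar *m y) i1 0) (b i1 0)) => h4; first lra.
  exfalso; apply: Nyu.
  case: (Hcol' _ Py Ey) => al Hal.
  have E4 : (Ar *m y) i1 0 = b i1 0 by apply/eqP; rewrite eq_le h2 h4.
  have eal : al = ss.
    move: E4; rewrite Hal ArD ArZ /ss /r => e; rewrite -e; field; exact: lt0r_neq0.
  by rewrite Hal eal.
have Hedge : is_edge PP v u.
  split; first by case: Vv.
  split => //; split; first by apply/eqP; rewrite eq_sym.
  exists a; split => //; split => //; by rewrite Hau.
split => //.
right; exists u; split => //.
move=> z Vz Nzv Nzu.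
have := Hle _ (proj1 Vz); rewrite le_eqVlt => /orP [/eqP e|//].
case: (Hseg _ (proj1 Vz) e) => t [/andP [t0 t1] Ez].
exfalso.
case: (ltgtP t 0) => ht0; first by have := lt_le_trans ht0 t0; rewrite ltxx.
  case: (ltgtP t 1) => ht1; last first.
  - by move: Nzu; rewrite Ez ht1 subrr scale0r add0r scale1r eqxx.
  - by have := lt_le_trans ht1 t1; rewrite ltxx.
  have hl : 0 < 1 - t < 1 by exact: arith1.
  have Ez' : z = (1 - t) *: v + (1 - (1 - t)) *: u.
    by rewrite Ez; congr (_ + _ *: _); ring.
  case: (vertex_extreme Vz (proj1 Vv) Pu hl Ez') => e'.
    by move: Nzv; rewrite e' eqxx.
  by move: Nzu; rewrite e' eqxx.
by move: Nzv; rewrite Ez ht0 subr0 scale1r scale0r addr0 eqxx.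
Qed.



Lemma main_sec d : aff_dim PP d ->
  monotone_diameter_le PP ((d.-1 * mx_inf_norm A * n * k).+1)%N.
Proof.
move=> Had c v w Gen Vv Cw.
case: (face_at_v Had Vv) => aZ [a [Ea Hb Hle Hcase]].
set N := (d.-1 * mx_inf_norm A * n * k)%N.
have Hint : forall z, is_vertex PP z -> exists zz : int, dotv a z = zz%:~R.
  move=> z Vz; case: (fin_all_exists (Hlat Vz)) => zc Hzc.
  exists (\sum_l aZ l 0 * zc l); rewrite rmorph_sum /dotv; apply: eq_bigr => l _.
  by rewrite Ea mxE Hzc rmorphM.
have Hbd : forall x, is_vertex PP x -> dotv a x - dotv a w <= N%:R.
  move=> x Vx; rewrite -dotvBr /dotv.
  have Heach : forall l, a l 0 * (x - w) l 0 <= ((d.-1 * mx_inf_norm A) * k)%N%:R.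
    move=> l.
    have h1 : `|a l 0| <= (d.-1 * mx_inf_norm A)%N%:R.
      rewrite Ea mxE -intr_norm.
      have := Hb l; rewrite -(ler_int R) => h; exact: h.
    have h2 : `|(x - w) l 0| <= k%:R.
      have := @Hbox _ (proj1 Vx) l; have := @Hbox _ (proj1 (proj1 Cw)) l.
      rewrite !mxE => /andP [w0 w1] /andP [x0 x1].
      rewrite ler_norml; apply/andP; split; lra.
    apply: le_trans (ler_norm _) _; rewrite normrM natrM.
    by apply: ler_pM => //; exact: normr_ge0.
  apply: le_trans (ler_sum _ (fun l _ => Heach l)) _.
  rewrite sumr_const card_ord -mulrnA.
  have -> : ((d.-1 * mx_inf_norm A * k) * n)%N = N by rewrite /N; lia.
  by [].
have I1of : forall x, (forall z, is_vertex PP z -> dotv a z <= dotv a x) ->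
    forall z, is_vertex PP z -> dotv a z + 0 * dotv c z <= dotv a x + 0 * dotv c x.
  by move=> x H z Vz; rewrite !mul0r !addr0; exact: H.
case: Hcase => [H1|[u [Vu Nuv Euv Hau Hoth]]].
  have I2 : forall z, is_vertex PP z -> dotv c v < dotv c z -> dotv a z < dotv a v.
    by move=> z Vz Cz; apply: H1 => //; apply/negP => /eqP e; rewrite e ltxx in Cz.
  case: (@path_lemma a c w Gen Cw Hint N v 0 Vv (lexx 0)
          (I1of v (fun z Vz => Hle z (proj1 Vz))) I2 (Hbd v Vv)).
  by move=> L [HL HP]; exists L; split => //; apply: leqW.
have Ecu := Gen v u Euv.
case: (ltgtP (dotv c v) (dotv c u)) => Hc; last by [].
  have I2 : forall z, is_vertex PP z -> dotv c u < dotv c z -> dotv a z < dotv a u.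
    move=> z Vz Cz; rewrite Hau; apply: Hoth => //.
      by apply/negP => /eqP e; move: Cz; rewrite e => h; have := lt_trans Hc h; rewrite ltxx.
    by apply/negP => /eqP e; rewrite e ltxx in Cz.
  have I1u : forall z, is_vertex PP z -> dotv a z <= dotv a u.
    by move=> z Vz; rewrite Hau; exact: Hle (proj1 Vz).
  case: (@path_lemma a c w Gen Cw Hint N u 0 Vu (lexx 0) (I1of u I1u) I2 (Hbd u Vu)).
  move=> L [HL [f [f0 [fL Hf]]]]; exists L.+1; split => //.
  exists (fun i => if i is i'.+1 then f i' else v); split => //; split => //.
  by case=> [|i] Hi /=; [rewrite f0|exact: Hf].
have I2 : forall z, is_vertex PP z -> dotv c v < dotv c z -> dotv a z < dotv a v.
  move=> z Vz Cz; apply: Hoth => //.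
    by apply/negP => /eqP e; rewrite e ltxx in Cz.
  by apply/negP => /eqP e; move: Cz; rewrite e => h; have := lt_trans Hc h; rewrite ltxx.
case: (@path_lemma a c w Gen Cw Hint N v 0 Vv (lexx 0)
        (I1of v (fun z Vz => Hle z (proj1 Vz))) I2 (Hbd v Vv)).
by move=> L [HL HP]; exists L; split => //; apply: leqW.
Qed.


End Poly.

Theorem mainTheorem4 (R : realType) (n m k d : nat)
  (A : 'M[int]_(m, n)) (b : 'cV[R]_m) :
  (forall x, polyhedron A b x -> forall i : 'I_n, 0 <= x i 0 <= k%:R) ->
  lattice_vertices (polyhedron A b) ->
  aff_dim (polyhedron A b) d ->
  monotone_diameter_le (polyhedron A b)
    ((d.-1 * mx_inf_norm A * n * k).+1)%N.
Proof.
move=> Hbox Hlat Had.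
exact: (@main_sec R n m k A b Hbox Hlat d Had).
Qed.
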